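(* Let $\mathcal{X},\mathcal{Y}$ be domains of $\mathbb{R}^d$ (or of the torus), $\mathcal{H}$ a real Hilbert space, $\varphi:\mathcal{X}\to\mathcal{H}$ smooth, $\Phi m=\int_{\mathcal{X}}\varphi\,dm$, and let $T:\mathcal{X}\to\mathcal{Y}$ be a bijection, with $T$ and $T^{-1}$ differentiable, such that the Jacobian of $T^{-1}$ is invertible everywhere. Let $\lambda>0$, $y\in\mathcal{H}$ and consider $$(\mathrm{A})\ \min_{m\in\mathcal{M}(\mathcal{X})}\tfrac12\|y-\Phi m\|^2_{\mathcal{H}}+\lambda|m|(\mathcal{X}),\qquad(\mathrm{B})\ \min_{m\in\mathcal{M}(\mathcal{Y})}\tfrac12\|y-(\Phi\circ T^{-1}_\sharp)m\|^2_{\mathcal{H}}+\lambda|m|(\mathcal{Y}).$$ If $\mu$ solves (A), then $\nu=T_\sharp\mu$ solves (B), and the dual certificates satisfy $\eta_D^{\Phi\circ T^{-1}_\sharp,y}=\eta_D^{\Phi,y}\circ T^{-1}$. Moreover, if $y=\Phi m_{a,Z}$ for some $a\in\mathbb{R}^N$ and $Z=(z_1,\dots,z_N)\in\mathcal{X}^N$, the pre-certificates satisfy $\eta_V^{\Phi\circ T^{-1}_\sharp,y}=\eta_V^{\Phi,y}\circ T^{-1}$.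
   Context: $T_\sharp\mu$ is the pushforward: $\int f\,d(T_\sharp\mu)=\int f\circ T\,d\mu$; thus $(\Phi\circ T^{-1}_\sharp)m=\int_{\mathcal{Y}}\varphi(T^{-1}(u))\,dm(u)$. $m_{a,Z}=\sum_ia_i\delta_{z_i}$, and $y=\Phi m_{a,Z}=(\Phi\circ T^{-1}_\sharp)m_{a,TZ}$ with $TZ=(Tz_i)_i$. For an operator $A$ of the form $m\mapsto\int\phi\,dm$ with kernel $\phi$, $(A^*p)(x)=\langle\phi(x),p\rangle$. The dual certificate of the problem with operator $A$ is $\eta_D^{A,y}=\frac1\lambda A^*(y-Am)$ for $m$ a solution. The pre-certificate $\eta_V^{\Phi,y}=\Phi^*p$ where $p$ has minimal norm subject to $(\Phi^*p)(z_i)=1$, $\nabla(\Phi^*p)(z_i)=0$ for all $i$; $\eta_V^{\Phi\circ T^{-1}_\sharp,y}$ is defined in the same way with operator $\Phi\circ T^{-1}_\sharp$ and positions $Tz_i$. *)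

(* Defs.v *)
From HB Require Import structures.
From mathcomp Require Import all_boot all_order all_algebra.
From mathcomp Require Import all_classical all_reals all_analysis.
Set Implicit Arguments.
Unset Strict Implicit.
Unset Printing Implicit Defensive.
Import Order.TTheory GRing.Theory Num.Theory numFieldNormedType.Exports.
Local Open Scope classical_set_scope.
Local Open Scope ring_scope.

Definition Rd (R : realType) (d : nat) : measurableType _ :=
  g_sigma_algebraType (@open 'rV[R]_d).

(** A real Hilbert space: a complete normed space whose norm is induced by a
    symmetric bilinear form [ip] (which is then automatically positive
    definite). *)
Definition is_hilbert_inner_product (R : realType) (H : completeNormedModType R)
    (ip : H -> H -> R) : Prop :=
  [/\ forall x y, ip x y = ip y x,
      forall a x y z, ip (a *: x + y) z = a * ip x z + ip y z &
      forall x, `|x| ^+ 2 = ip x x].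

Definition is_domain (R : realType) (d : nat) (D : set 'rV[R]_d) : Prop :=
  [/\ D !=set0, open D & connected D].

Section blasso.
Context {R : realType} {d : nat}.
Local Notation V := 'rV[R]_d.
Local Notation T := (Rd R d).

(** [m] belongs to M(D): a finite signed Borel measure (charge) on R^d
    carried by D. *)
Definition concentrated (D : set V) (m : {charge set T -> \bar R}) : Prop :=
  forall A : set T, measurable A -> m A = m (A `&` D).

Definition total_variation (D : set V) (m : {charge set T -> \bar R}) : \bar R :=
  ereal_sup [set s | exists n (E : 'I_n -> set T),
     [/\ forall i, measurable (E i), trivIset [set: 'I_n] E,
         \bigcup_i E i = D & s = (\sum_(i < n) `|m (E i)|)%E]].

Lemma hahn_ex (m : {charge set T -> \bar R}) :
  exists PN : set T * set T, hahn_decomposition m PN.1 PN.2.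
Proof. by have [P [N h]] := Hahn_decomposition m; exists (P, N). Qed.

Definition hahn_pickP (m : {charge set T -> \bar R}) :=
  proj2_sig (cid (hahn_ex m)).

Definition cintegral (m : {charge set T -> \bar R}) (D : set V) (f : V -> R)
    : \bar R :=
  (\int[jordan_pos (hahn_pickP m)]_(x in (D : set T)) (f x)%:E
   - \int[jordan_neg (hahn_pickP m)]_(x in (D : set T)) (f x)%:E)%E.

Definition push (D : set V) (f : V -> V) (m : set T -> \bar R) : set T -> \bar R :=
  fun A => m ((D : set T) `&` (f @^-1` A : set T)).

Section push_charge.
Variables (D : set V) (f : V -> V) (mD : measurable (D : set T))
  (mf : measurable_fun (D : set T) (f : T -> T)) (m : {charge set T -> \bar R}).

Let push0 : push D f m set0 = 0%E.
Proof. by rewrite /push preimage_set0 setI0 charge0. Qed.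

Let push_finite (A : set T) : measurable A -> push D f m A \is a fin_num.
Proof. by move=> mA; apply: fin_num_measure; exact: mf. Qed.

Let push_sigma_additive : semi_sigma_additive (push D f m).
Proof.
move=> F mF tF mUF; rewrite /push preimage_bigcup setI_bigcupr.
apply: charge_semi_sigma_additive.
- by move=> n; exact: mf.
- apply/trivIsetP => /= i j _ _ ij.
  rewrite setIACA setIid -preimage_setI.
  by move/trivIsetP : tF => /(_ _ _ _ _ ij) ->//; rewrite preimage_set0 setI0.
- by rewrite -setI_bigcupr -preimage_bigcup; exact: mf.
Qed.

HB.instance Definition _ := isCharge.Build _ _ _ (push D f m)
  push0 push_finite push_sigma_additive.

Definition push_charge : {charge set T -> \bar R} := push D f m.

End push_charge.

Variables (H : completeNormedModType R) (ip : H -> H -> R).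

(** the operator m |-> int_D k dm (weak/Pettis sense: <int k dm, p> = int <k,p> dm) *)
Definition opK (D : set V) (k : V -> H) (m : {charge set T -> \bar R}) : H :=
  xget 0 [set h | forall p, (ip h p)%:E = cintegral m D (fun x => ip (k x) p)].

Definition blasso_obj (y : H) (lam : R) (D : set V) (k : V -> H)
    (m : {charge set T -> \bar R}) : \bar R :=
  ((2^-1 * `|y - opK D k m| ^+ 2)%:E + lam%:E * total_variation D m)%E.

Definition blasso_solution (y : H) (lam : R) (D : set V) (k : V -> H)
    (m : {charge set T -> \bar R}) : Prop :=
  concentrated D m /\
  forall m', concentrated D m' ->
    (blasso_obj y lam D k m <= blasso_obj y lam D k m')%E.

Definition dual_cert (y : H) (lam : R) (D : set V) (k : V -> H)
    (m : {charge set T -> \bar R}) : V -> R :=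
  fun x => lam^-1 * ip (k x) (y - opK D k m).

Definition adjK (k : V -> H) (p : H) : V -> R := fun x => ip (k x) p.

Definition precert_admissible (k : V -> H) (N : nat) (Z : 'I_N -> V) (p : H)
    : Prop :=
  forall i, adjK k p (Z i) = 1 /\ forall v : V, 'd (adjK k p) (Z i) v = 0.

(** p has minimal norm among admissible vectors; then eta_V = K^* p *)
Definition precert_minnorm (k : V -> H) (N : nat) (Z : 'I_N -> V) (p : H)
    : Prop :=
  precert_admissible k Z p /\
  forall q, precert_admissible k Z q -> `|p| <= `|q|.

End blasso.

(* Main.v *)
Require Import Defs.
From HB Require Import structures.
From mathcomp Require Import all_boot all_order all_algebra.
From mathcomp Require Import all_classical all_reals all_analysis.
From mathcomp Require Import ring lra measurable_realfun.
Import Order.TTheory GRing.Theory Num.Theory numFieldNormedType.Exports.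
Local Open Scope classical_set_scope.
Local Open Scope ring_scope.

Section hilb.
Variables (R : realType) (d : nat) (H : completeNormedModType R) (ip : H -> H -> R).
Hypothesis hip : is_hilbert_inner_product ip.

Lemma ip_sym x y : ip x y = ip y x. Proof. by case: hip. Qed.
Lemma ip_lin a x y z : ip (a *: x + y) z = a * ip x z + ip y z. Proof. by case: hip. Qed.
Lemma ip_norm x : `|x| ^+ 2 = ip x x. Proof. by case: hip. Qed.
Lemma ip0l z : ip 0 z = 0.
Proof. have := ip_lin 1 0 0 z; rewrite scaler0 addr0 mul1r.
by move=> /(congr1 (fun t => t - ip 0 z)); rewrite subrr addrK => <-. Qed.
Lemma ipDl x y z : ip (x + y) z = ip x z + ip y z.
Proof. by rewrite -[x]scale1r ip_lin mul1r scale1r. Qed.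
Lemma ipZl a x z : ip (a *: x) z = a * ip x z.
Proof. by rewrite -[a *: x]addr0 ip_lin ip0l addr0. Qed.
Lemma ipDr x y z : ip z (x + y) = ip z x + ip z y.
Proof. by rewrite ip_sym ipDl !(ip_sym z). Qed.
Lemma ipZr a x z : ip z (a *: x) = a * ip z x.
Proof. by rewrite ip_sym ipZl ip_sym. Qed.
Lemma ipNl x z : ip (- x) z = - ip x z.
Proof. by rewrite -scaleN1r ipZl mulN1r. Qed.
Lemma ipNr x z : ip z (- x) = - ip z x.
Proof. by rewrite ip_sym ipNl ip_sym. Qed.

Lemma ip_polar x p : ip x p = (`|x + p| ^+ 2 - `|x - p| ^+ 2) / 4.
Proof.
rewrite !ip_norm !ipDl !ipDr !ipNl !ipNr (ip_sym p x).
by field.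
Qed.

Lemma ip_cont p : continuous (fun x => ip x p).
Proof.
have -> : (fun x => ip x p) = (fun x => (`|x + p| ^+ 2 - `|x - p| ^+ 2) / 4).
  by apply: funext => x; rewrite ip_polar.
have -> : (fun x => (`|x + p| ^+ 2 - `|x - p| ^+ 2) / 4) = (fun x => (`|x + p| * `|x + p| - `|x - p| * `|x - p|) / 4 :> R).
  by apply: funext => x; rewrite !expr2.
move=> x.
apply: cvgMr_tmp; apply: cvgB; apply: cvgM; apply: cvg_norm;
  (apply: cvgD || apply: cvgB); (exact: cvg_id || exact: cvg_cst).
Qed.

Lemma ip_linear p : linear (fun x : H => ip x p : R^o).
Proof. by move=> a x y; rewrite ip_lin. Qed.

Definition ipL p : {linear H -> R^o} :=
  HB.pack (fun x : H => ip x p : R^o) (GRing.isLinear.Build R H R^o _ _ (ip_linear p)).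
Lemma ipLE p x : ipL p x = ip x p. Proof. by []. Qed.

Lemma diff_ip (phi : 'rV[R]_d -> H) z p : differentiable phi z ->
  differentiable (fun x => ip (phi x) p) z.
Proof.
move=> dp.
have e : (fun x => ip (phi x) p) = (ipL p) \o phi by [].
have cL : continuous (ipL p) by exact: ip_cont.
have dL : forall y, differentiable (ipL p) y by move=> y; exact: linear_differentiable.
by rewrite e; exact: differentiable_comp.
Qed.
Lemma diff_ipE (phi : 'rV[R]_d -> H) z p v : differentiable phi z ->
  'd (fun x => ip (phi x) p) z v = ip ('d phi z v) p.
Proof.
move=> dp.
have e : (fun x => ip (phi x) p) = (ipL p) \o phi by [].
have cL : continuous (ipL p) by exact: ip_cont.
have dL : forall y, differentiable (ipL p) y by move=> y; exact: linear_differentiable.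
by rewrite e diff_comp // diff_lin.
Qed.

Lemma part2 (X Y : set 'rV[R]_d) (phi : 'rV[R]_d -> H) (T Tinv : 'rV[R]_d -> 'rV[R]_d) :
  (forall x, X x -> differentiable phi x) ->
  (forall x, X x -> Y (T x)) ->
  (forall x, X x -> Tinv (T x) = x) ->
  (forall u, Y u -> differentiable Tinv u) ->
  (forall u, Y u -> lin1_mx ('d Tinv u) \in unitmx) ->
  forall (N : nat) (Z : 'I_N -> 'rV[R]_d),
     (forall i, X (Z i)) ->
     forall p q : H,
       precert_minnorm ip phi Z p ->
       precert_minnorm ip (phi \o Tinv) (T \o Z) q ->
       forall u, Y u -> adjK ip (phi \o Tinv) q u = adjK ip phi p (Tinv u).
Proof.
move=> dphi XY TinvT dTinv unitT N Z ZX p q [pa pmin] [qa qmin] u Yu.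
pose A (r : H) := forall i, ip (phi (Z i)) r = 1 /\ forall v, ip ('d phi (Z i) v) r = 0.
have adm1 r : precert_admissible ip phi Z r <-> A r.
  rewrite /precert_admissible /A /adjK; split => h i; have [h1 h2] := h i;
    split => // v; have dz := dphi _ (ZX i);
    [by rewrite -(h2 v) diff_ipE | by rewrite diff_ipE ?h2].
have dcomp r i v : 'd (adjK ip (phi \o Tinv) r) (T (Z i)) v
    = ip ('d phi (Z i) ('d Tinv (T (Z i)) v)) r.
  have dg : differentiable (adjK ip phi r) (Tinv (T (Z i))).
    by rewrite TinvT //; apply: diff_ip; exact: dphi.
  have -> : adjK ip (phi \o Tinv) r = adjK ip phi r \o Tinv by [].
  rewrite diff_comp //; last by apply: dTinv; exact: XY.
  by rewrite /= TinvT // /adjK diff_ipE //; exact: dphi.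
have adm2 r : precert_admissible ip (phi \o Tinv) (T \o Z) r <-> A r.
  rewrite /precert_admissible /A; split => h i; have [h1 h2] := h i.
    split; first by move: h1; rewrite /adjK /= TinvT.
    move=> w; have uM := unitT _ (XY _ (ZX i)).
    have := h2 (w *m invmx (lin1_mx ('d Tinv (T (Z i))))).
    by rewrite /= dcomp -mul_rV_lin1 mulmxKV.
  split; first by rewrite /adjK /= TinvT.
  by move=> v; rewrite /= dcomp h2.
have Ap : A p by apply/adm1.
have Aq : A q by apply/adm2.
have npq : `|p| <= `|q| by apply: pmin; apply/adm1.
have nqp : `|q| <= `|p| by apply: qmin; apply/adm2.
have Am : A (2^-1 *: (p + q)).
  move=> i; have [p1 p2] := Ap i; have [q1 q2] := Aq i.
  split; first by rewrite ipZr ipDr p1 q1; lra.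
  by move=> v; rewrite ipZr ipDr p2 q2; lra.
have nm : `|p| <= `|2^-1 *: (p + q)| by apply: pmin; apply/adm1.
have epq : p = q.
  have e1 : `|p| = `|q| by apply/eqP; rewrite eq_le npq nqp.
  have : `|p| ^+ 2 <= `|2^-1 *: (p + q)| ^+ 2.
    by rewrite lerXn2r // ?nnegrE.
  rewrite !ip_norm ipZl !ipZr !ipDl !ipDr.
  have e2 : ip q q = ip p p by rewrite -!ip_norm e1.
  have e3 : ip (p - q) (p - q) = ip p p + ip q q - ip p q - ip q p.
    by rewrite !ipDl !ipDr !ipNl !ipNr; ring.
  move=> h.
  have : ip (p - q) (p - q) <= 0 by rewrite e3 (ip_sym q p) e2; rewrite e2 (ip_sym q p) in h; lra.
  rewrite -ip_norm => h2; apply/eqP; rewrite -subr_eq0 -normr_eq0.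
  by rewrite -sqrf_eq0 eq_le h2 sqr_ge0.
by rewrite /adjK /= epq.
Qed.
End hilb.
Section cv.
Variables (R : realType) (d : nat).
Local Notation V := 'rV[R]_d.
Local Notation Tm := (Rd R d).

Lemma ge0_cv (mu nu : {measure set Tm -> \bar R}) (D D' : set Tm)
  (mD : measurable D) (mD' : measurable D') (f : V -> V)
  (mf : measurable_fun D (f : Tm -> Tm)) (fD : forall x, D x -> D' (f x))
  (hnu : forall A, measurable A -> nu A = mu (D `&` (f : Tm -> Tm) @^-1` A))
  (h : Tm -> \bar R) (mh : measurable_fun D' h) (h0 : forall y, D' y -> (0 <= h y)%E) :
  (\int[nu]_(y in D') h y = \int[mu]_(x in D) h (f x))%E.
Proof.
pose F : Tm -> Tm := fun x => if pselect (D x) then f x else 0.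
have mF : measurable_fun setT F.
  move=> _ B mB; rewrite setTI.
  have -> : F @^-1` B = (D `&` (f : Tm -> Tm) @^-1` B) `|` (~` D `&` [set _ | B 0]).
    apply/seteqP; split => x /=; rewrite /F; case: pselect => Dx.
    - by move=> Bx; left.
    - by move=> Bx; right.
    - by case=> -[].
    - by case=> -[].
  apply: measurableU; first exact: mf.
  apply: measurableI; first exact: measurableC.
  case: (pselect (B 0)) => B0.
    by rewrite (_ : [set _ | B 0] = setT) //; apply/seteqP; split.
  by rewrite (_ : [set _ | B 0] = set0) //; apply/seteqP; split.
transitivity (\int[pushforward (mrestr mu mD) F]_(y in D') h y)%E.
  apply: eq_measure_integral => A mA AD'.
  rewrite hnu // /pushforward /mrestr; congr (mu _).
  apply/seteqP; split => x /=; rewrite /F; case: pselect => //.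
  - by move=> Dx [_ Ax].
  - by move=> nDx [].
  - by move=> Dx [].
  - by move=> nDx [].
rewrite ge0_integral_pushforward //; last by move=> y /set_mem; exact: h0.
have mFD' : measurable (F @^-1` D') by rewrite -[_ @^-1` _]setTI; exact: mF.
rewrite (ge0_negligible_integral _ (N := ~` D)) //; first last.
- by change (mu (~` D `&` D) = 0%E); rewrite setICl measure0.
- by move=> x /= D'F; exact: h0.
- apply: (measurable_comp mD') => //; first by move=> _ [x ? <-].
  exact: measurable_funTS.
- exact: measurableC.
have -> : F @^-1` D' `\` ~` D = D.
  apply/seteqP; split => x /=.
  - by move=> [_]; apply: contrapT.
  - move=> Dx; split; last by move=> /(_ Dx).
    by rewrite /F; case: pselect => // Dx'; exact: fD.
rewrite (eq_measure_integral mu); last first.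
  by move=> A mA AD; change (mu (A `&` D) = mu A); rewrite setIidl.
apply: eq_integral => x /set_mem Dx.
by rewrite /= /F; case: pselect.
Qed.


Lemma cv_int (mu nu : {measure set Tm -> \bar R}) (D D' : set Tm)
  (mD : measurable D) (mD' : measurable D') (f : V -> V)
  (mf : measurable_fun D (f : Tm -> Tm)) (fD : forall x, D x -> D' (f x))
  (hnu : forall A, measurable A -> nu A = mu (D `&` (f : Tm -> Tm) @^-1` A))
  (g : V -> R) (mg : measurable_fun D' (g : Tm -> R)) :
  (\int[nu]_(y in D') (g y)%:E = \int[mu]_(x in D) (g (f x))%:E)%E.
Proof.
have mg' : measurable_fun D' (fun y : Tm => (g y)%:E) by exact/measurable_EFinP.
rewrite integralE [RHS]integralE; congr (_ - _)%E.
- have m1 := measurable_funepos mg'.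
  have p1 : forall y, D' y -> (0 <= ((fun y : Tm => (g y)%:E)^\+)%E y)%E.
    by move=> y _; exact: funepos_ge0.
  rewrite (@ge0_cv mu nu D D' mD mD' f mf fD hnu _ m1 p1).
  by apply: eq_integral => x _; rewrite (funepos_comp (fun y : Tm => (g y)%:E) f).
- have m1 := measurable_funeneg mg'.
  have p1 : forall y, D' y -> (0 <= ((fun y : Tm => (g y)%:E)^\-)%E y)%E.
    by move=> y _; exact: funeneg_ge0.
  rewrite (@ge0_cv mu nu D D' mD mD' f mf fD hnu _ m1 p1).
  by apply: eq_integral => x _; rewrite (funeneg_comp (fun y : Tm => (g y)%:E) f).
Qed.

Lemma open_pre (U : topologicalType) (D : set V) (g : V -> U) (O : set U) :
  open D -> (forall x, D x -> {for x, continuous g}) -> open O ->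
  open (D `&` g @^-1` O).
Proof.
move=> oD cg oO; rewrite openE => x [Dx Ox].
apply: filterI; first by apply: open_nbhs_nbhs; split.
exact: (cg x Dx O (open_nbhs_nbhs (conj oO Ox))).
Qed.

Lemma mfun_VV (D : set V) (g : V -> V) : open D ->
  (forall x, D x -> {for x, continuous g}) ->
  measurable_fun (D : set Tm) (g : Tm -> Tm).
Proof.
move=> oD cg; apply: (@measurability _ _ Tm Tm (D : set Tm) (g : Tm -> Tm) (@open V)) => //.
move=> _ [B oB <-]; apply: sub_sigma_algebra; exact: open_pre.
Qed.

Lemma mfun_VR (D : set V) (g : V -> R) : open D ->
  (forall x, D x -> {for x, continuous g}) ->
  measurable_fun (D : set Tm) g.
Proof.
move=> oD cg; apply: (measurability _ (RGenOpens.measurableE R)).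
move=> _ [_ [a [b ->]] <-]; apply: sub_sigma_algebra.
by apply: open_pre => //; exact: interval_open.
Qed.

End cv.

Section charges.
Variables (R : realType) (d : nat).
Local Notation V := 'rV[R]_d.
Local Notation Tm := (Rd R d).
Variables (D D' : set Tm) (mD : measurable D) (mD' : measurable D') (f h : V -> V)
  (mf : measurable_fun D (f : Tm -> Tm)) (mh : measurable_fun D' (h : Tm -> Tm))
  (fD : forall x, D x -> D' (f x)) (hD : forall y, D' y -> D (h y))
  (hf : forall x, D x -> h (f x) = x).

Lemma jposE (nu : {charge set Tm -> \bar R}) P N (hPN : hahn_decomposition nu P N) A :
  measurable A -> jordan_pos hPN A = nu (A `&` P).
Proof. by move=> mA; rewrite jordan_posE cjordan_posE /crestr0 mem_set. Qed.

Lemma jnegE (nu : {charge set Tm -> \bar R}) P N (hPN : hahn_decomposition nu P N) A :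
  measurable A -> jordan_neg hPN A = (- nu (A `&` N))%E.
Proof. by move=> mA; rewrite jordan_negE cjordan_negE /crestr0 mem_set. Qed.

Lemma hahn_push (m : {charge set Tm -> \bar R}) P N :
  hahn_decomposition m P N ->
  hahn_decomposition (push_charge mD mf m)
    ((D' `&` (h : Tm -> Tm) @^-1` P) `|` ~` D') (D' `&` (h : Tm -> Tm) @^-1` N).
Proof.
move=> [[mP posP] [mN negN] PNT PN0]; split.
- split; first by apply: measurableU; [exact: mh|exact: measurableC].
  move=> B mB BP; rewrite /=/push; apply: posP; first exact: mf.
  move=> x [Dx Bfx]; have [[_ Pfx]|] := BP _ Bfx; first by move: Pfx; rewrite /= hf.
  by move=> /(_ (fD x Dx)).
- split; first exact: mh.
  move=> B mB BN; rewrite /=/push; apply: negN; first exact: mf.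
  by move=> x [Dx Bfx]; have [_ Nfx] := BN _ Bfx; move: Nfx; rewrite /= hf.
- apply/seteqP; split => // y _.
  have [D'y|nD'y] := pselect (D' y); last by left; right.
  have : (P `|` N) (h y) by rewrite PNT.
  by case => [Ph|Nh]; [left; left|right].
- apply/seteqP; split => // y [[[D'y Py]|nD'y] [D'y' Ny]] //.
  by have : (P `&` N) (h y) by []; rewrite PN0.
Qed.

Lemma jpos_push (m : {charge set Tm -> \bar R}) A : measurable A ->
  jordan_pos (hahn_pickP (push_charge mD mf m)) A
  = jordan_pos (hahn_pickP m) (D `&` (f : Tm -> Tm) @^-1` A).
Proof.
move=> mA; have hp := @hahn_push m _ _ (hahn_pickP m).
rewrite jposE // jposE //; last exact: mf.
have [-> _] := Hahn_decomposition_uniq (hahn_pickP _) hp mA.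
rewrite /= /push; congr (m _); apply/seteqP; split => x /=.
- move=> [Dx [Afx PP]]; split => //; case: PP => [[_ Pfx]|nD].
    by move: Pfx; rewrite /= hf.
  by exfalso; apply: nD; exact: fD.
- move=> [[Dx Afx] Px]; split => //; split => //; left; split; first exact: (fD x).
  by rewrite /= hf.
Qed.

Lemma jneg_push (m : {charge set Tm -> \bar R}) A : measurable A ->
  jordan_neg (hahn_pickP (push_charge mD mf m)) A
  = jordan_neg (hahn_pickP m) (D `&` (f : Tm -> Tm) @^-1` A).
Proof.
move=> mA; have hp := @hahn_push m _ _ (hahn_pickP m).
rewrite jnegE // jnegE //; last exact: mf.
have [_ ->] := Hahn_decomposition_uniq (hahn_pickP _) hp mA.
rewrite /= /push; congr (- m _)%E; apply/seteqP; split => x /=.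
- move=> [Dx [Afx [_ Nfx]]]; split => //.
  by move: Nfx; rewrite /= hf.
- move=> [[Dx Afx] Nx]; split => //; split => //; split; first exact: (fD x).
  by rewrite /= hf.
Qed.

Lemma cint_push (m : {charge set Tm -> \bar R}) (g : V -> R)
  (mg : measurable_fun D' (g : Tm -> R)) :
  cintegral (push_charge mD mf m) D' g = cintegral m D (g \o f).
Proof.
rewrite /cintegral; congr (_ - _)%E.
- exact: (@cv_int R d _ _ D D' mD mD' f mf fD (jpos_push m) g mg).
- exact: (@cv_int R d _ _ D D' mD mD' f mf fD (jneg_push m) g mg).
Qed.

Lemma conc_push (m : {charge set Tm -> \bar R}) :
  concentrated D' (push_charge mD mf m).
Proof.
move=> A mA; rewrite /= /push; congr (m _); apply/seteqP; split => x /=.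
- by move=> [Dx Afx]; split => //; split => //; exact: fD.
- by move=> [Dx [Afx _]].
Qed.

Lemma tv_push (m : {charge set Tm -> \bar R}) :
  Defs.total_variation D' (push_charge mD mf m) = Defs.total_variation D m.
Proof.
rewrite /Defs.total_variation; congr (ereal_sup _); apply/seteqP; split => s /=.
- move=> [n [E [mE tE UE ->]]].
  exists n, (fun i => D `&` (f : Tm -> Tm) @^-1` E i); split.
  + by move=> i; exact: mf.
  + apply/trivIsetP => i j _ _ ij.
    move/trivIsetP : tE => /(_ i j I I ij) E0.
    apply/seteqP; split => // x [[_ Ei] [_ Ej]].
    by have : (E i `&` E j) (f x) by []; rewrite E0.
  + rewrite -setI_bigcupr -preimage_bigcup UE.
    apply/seteqP; split => x; first by case.
    by move=> Dx; split => //; exact: fD.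
  + by [].
- move=> [n [F [mF tF UF ->]]].
  have FD i : F i `<=` D by move=> x Fx; rewrite -UF; exists i.
  exists n, (fun i => D' `&` (h : Tm -> Tm) @^-1` F i); split.
  + by move=> i; exact: mh.
  + apply/trivIsetP => i j _ _ ij.
    move/trivIsetP : tF => /(_ i j I I ij) F0.
    apply/seteqP; split => // x [[_ Fi] [_ Fj]].
    by have : (F i `&` F j) (h x) by []; rewrite F0.
  + rewrite -setI_bigcupr -preimage_bigcup UF.
    apply/seteqP; split => x; first by case.
    by move=> D'x; split => //; exact: hD.
  + apply: eq_bigr => i _; rewrite /= /push; congr (`| m _ |)%E.
    apply/seteqP; split => x /=.
    * move=> Fx; have Dx := FD i x Fx; split => //; split; first exact: fD.
      by rewrite /= hf.
    * by move=> [Dx [_ Fh]]; move: Fh; rewrite /= hf.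
Qed.

Lemma opK_push (H : completeNormedModType R) (ip : H -> H -> R)
  (m : {charge set Tm -> \bar R}) (k k' : V -> H) :
  (forall x, D x -> k' (f x) = k x) ->
  (forall p, measurable_fun D' ((fun x => ip (k' x) p) : Tm -> R)) ->
  opK ip D' k' (push_charge mD mf m) = opK ip D k m.
Proof.
move=> kk mk; rewrite /opK; congr (xget 0 _).
have e p : cintegral (push_charge mD mf m) D' (fun x => ip (k' x) p)
    = cintegral m D (fun x => ip (k x) p).
  rewrite cint_push // /cintegral; congr (_ - _)%E;
    by apply: eq_integral => x /set_mem Dx /=; rewrite kk.
by apply/seteqP; split => z /= hz p; rewrite hz e.
Qed.

End charges.

Theorem mainTheorem7 (R : realType) (d : nat)
  (H : completeNormedModType R) (ip : H -> H -> R)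
  (X Y : set 'rV[R]_d) (phi : 'rV[R]_d -> H)
  (T Tinv : 'rV[R]_d -> 'rV[R]_d) (lam : R) (y : H)
  (mX : measurable (X : set (Rd R d)))
  (mT : measurable_fun (X : set (Rd R d)) (T : Rd R d -> Rd R d)) :
  is_hilbert_inner_product ip ->
  is_domain X -> is_domain Y ->
  (forall x, X x -> differentiable phi x) ->
  (* T : X -> Y bijection with inverse Tinv *)
  (forall x, X x -> Y (T x)) -> (forall u, Y u -> X (Tinv u)) ->
  (forall x, X x -> Tinv (T x) = x) -> (forall u, Y u -> T (Tinv u) = u) ->
  (forall x, X x -> differentiable T x) ->
  (forall u, Y u -> differentiable Tinv u) ->
  (* the Jacobian matrix of Tinv is invertible everywhere *)
  (forall u, Y u -> lin1_mx ('d Tinv u) \in unitmx) ->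
  0 < lam ->
  (forall mu : {charge set Rd R d -> \bar R},
     blasso_solution ip y lam X phi mu ->
     blasso_solution ip y lam Y (phi \o Tinv) (push_charge mX mT mu) /\
     (forall u, Y u ->
        dual_cert ip y lam Y (phi \o Tinv) (push_charge mX mT mu) u
        = dual_cert ip y lam X phi mu (Tinv u)))
  /\
  (forall (N : nat) (a : 'I_N -> R) (Z : 'I_N -> 'rV[R]_d),
     (forall i, X (Z i)) ->
     y = \sum_(i < N) a i *: phi (Z i) ->
     forall p q : H,
       precert_minnorm ip phi Z p ->
       precert_minnorm ip (phi \o Tinv) (T \o Z) q ->
       forall u, Y u -> adjK ip (phi \o Tinv) q u = adjK ip phi p (Tinv u)).
Proof.
move=> hip [X0 oX cX] [Y0 oY cY] dphi XY YX TinvT TTinv dT dTinv unitT lam0.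
split; last first.
  move=> N a Z ZX _ p q hp hq u Yu.
  exact: (@part2 R d H ip hip X Y phi T Tinv dphi XY TinvT dTinv unitT N Z ZX p q hp hq u Yu).
have mY : measurable (Y : set (Rd R d)) by apply: sub_sigma_algebra.
have cTinv u : Y u -> {for u, continuous Tinv}.
  by move=> Yu; exact: differentiable_continuous (dTinv u Yu).
have cphi x : X x -> {for x, continuous phi}.
  by move=> Xx; exact: differentiable_continuous (dphi x Xx).
have mTinv : measurable_fun (Y : set (Rd R d)) (Tinv : Rd R d -> Rd R d).
  exact: mfun_VV oY cTinv.
have mk1 p : measurable_fun (Y : set (Rd R d))
    ((fun x => ip ((phi \o Tinv) x) p) : Rd R d -> R).
  apply: mfun_VR oY _ => u Yu.
  apply: (@continuous_comp _ _ _ Tinv (fun z => ip (phi z) p)); first exact: cTinv.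
  apply: (@continuous_comp _ _ _ phi (fun z => ip z p)); first exact/cphi/YX.
  exact: ip_cont hip p _.
have mk2 p : measurable_fun (X : set (Rd R d))
    ((fun x => ip (phi x) p) : Rd R d -> R).
  apply: mfun_VR oX _ => x Xx.
  apply: (@continuous_comp _ _ _ phi (fun z => ip z p)); first exact: cphi.
  exact: ip_cont hip p _.
have opK1 mu : opK ip Y (phi \o Tinv) (push_charge mX mT mu) = opK ip X phi mu.
  apply: (@opK_push R d X Y mX mY T Tinv mT mTinv XY TinvT H ip mu phi (phi \o Tinv)) => //.
  by move=> x Xx /=; rewrite TinvT.
have opK2 m' : opK ip X phi (push_charge mY mTinv m') = opK ip Y (phi \o Tinv) m'.
  exact: (@opK_push R d Y X mY mX Tinv T mTinv mT YX TTinv H ip m' (phi \o Tinv) phi).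
have tv1 mu : Defs.total_variation Y (push_charge mX mT mu) = Defs.total_variation X mu.
  exact: (@tv_push R d X Y mX mY T Tinv mT mTinv XY YX TinvT mu).
have tv2 m' : Defs.total_variation X (push_charge mY mTinv m') = Defs.total_variation Y m'.
  exact: (@tv_push R d Y X mY mX Tinv T mTinv mT YX XY TTinv m').
move=> mu [cmu minmu]; split; first split.
- exact: (@conc_push R d X Y mX T mT XY mu).
- move=> m' cm'; have := minmu _ (@conc_push R d Y X mY Tinv mTinv YX m').
  by rewrite /blasso_obj opK1 tv1 opK2 tv2.
- by move=> u Yu; rewrite /dual_cert opK1.
Qed.
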